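(* Let $n>1$ be an integer. Then \[ \mathrm{SL}_2(\mathbb{Z}[1/n])^{\mathrm{ab}} \simeq \begin{cases} 0 & \text{if } 2\mid n,\ 3\mid n,\\ \mathbb{Z}/3 & \text{if } 2\mid n,\ 3\nmid n,\\ \mathbb{Z}/4 & \text{if } 2\nmid n,\ 3\mid n,\\ \mathbb{Z}/12 & \text{if } 2\nmid n,\ 3\nmid n. \end{cases} \]
   Context: For a group $G$, $G^{\mathrm{ab}}=G/[G,G]$; $\mathbb{Z}[1/n]$ is the subring of $\mathbb{Q}$ generated by $1/n$. *)

(* Defs.v *)
From HB Require Import structures.
From mathcomp Require Import all_boot all_order all_algebra.
Set Implicit Arguments. Unset Strict Implicit. Unset Printing Implicit Defensive.
Import Order.TTheory GRing.Theory Num.Theory.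
Local Open Scope ring_scope.

(* Z[1/n] as the subring of Q generated by 1/n: rationals q with q * n^k in Z
   for some k. *)
Definition inZinv (n : nat) (q : rat) : Prop :=
  exists (k : nat) (z : int), q * (n%:R) ^+ k = z%:~R.

Definition SL2 (n : nat) (A : 'M[rat]_2) : Prop :=
  (forall i j, inZinv n (A i j)) /\ \det A = 1.

Definition commm (A B : 'M[rat]_2) : 'M[rat]_2 :=
  invmx A *m invmx B *m A *m B.

Inductive in_commSL2 (n : nat) : 'M[rat]_2 -> Prop :=
| cSL2_one : in_commSL2 n 1%:M
| cSL2_comm A B : SL2 n A -> SL2 n B -> in_commSL2 n (commm A B)
| cSL2_mul X Y : in_commSL2 n X -> in_commSL2 n Y -> in_commSL2 n (X *m Y)
| cSL2_inv X : in_commSL2 n X -> in_commSL2 n (invmx X).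

(* G^ab = G/[G,G] is isomorphic to the abelian group H: there is a group
   homomorphism G -> H that is surjective with kernel exactly [G,G]. *)
Definition SL2ab_iso (n : nat) (H : zmodType) : Prop :=
  exists f : 'M[rat]_2 -> H,
    [/\ forall A B, SL2 n A -> SL2 n B -> f (A *m B) = f A + f B,
        forall h : H, exists A, SL2 n A /\ f A = h
      & forall A, SL2 n A -> (f A = 0 <-> in_commSL2 n A)].

(* Main.v *)
Require Import Defs.
From HB Require Import structures.
From mathcomp Require Import all_boot all_order all_algebra.
From mathcomp Require Import ring zify.
From Stdlib Require ClassicalEpsilon.
Set Implicit Arguments. Unset Strict Implicit. Unset Printing Implicit Defensive.
Import Order.TTheory GRing.Theory Num.Theory.
Local Open Scope ring_scope.
Section M.
Variable R : comUnitRingType.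
Definition mk (a b c d : R) : 'M[R]_2 :=
  \matrix_(i < 2, j < 2) (if i == 0 :> nat then (if j == 0 :> nat then a else b)
                          else (if j == 0 :> nat then c else d)).
Lemma mk_eta (A : 'M[R]_2) : A = mk (A 0 0) (A 0 1) (A 1 0) (A 1 1).
Proof.
apply/matrixP => i j; rewrite !mxE.
by case: i => [[|[|i]] Hi] //; case: j => [[|[|j]] Hj] //=;
  congr (A _ _); apply: val_inj.
Qed.
Lemma mkE00 a b c d : (mk a b c d) 0 0 = a. Proof. by rewrite !mxE. Qed.
Lemma mkE01 a b c d : (mk a b c d) 0 1 = b. Proof. by rewrite !mxE. Qed.
Lemma mkE10 a b c d : (mk a b c d) 1 0 = c. Proof. by rewrite !mxE. Qed.
Lemma mkE11 a b c d : (mk a b c d) 1 1 = d. Proof. by rewrite !mxE. Qed.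
Lemma mk_mul a b c d a' b' c' d' :
  mk a b c d *m mk a' b' c' d' = mk (a*a' + b*c') (a*b' + b*d') (c*a'+d*c') (c*b'+d*d').
Proof.
apply/matrixP => i j; rewrite !mxE !big_ord_recl big_ord0 !mxE /=.
by case: i => [[|[|i]] Hi] //; case: j => [[|[|j]] Hj] //=; rewrite addr0.
Qed.
Lemma det_mk a b c d : \det (mk a b c d) = a * d - b * c.
Proof.
rewrite (expand_det_row _ 0) !big_ord_recl big_ord0 /cofactor !mxE /=.
rewrite !det_mx11 !mxE /= /bump /= expr0 expr1; ring.
Qed.
Lemma mk1 : 1%:M = mk 1 0 0 1.
Proof.
apply/matrixP => i j; rewrite !mxE.
by case: i => [[|[|i]] Hi] //; case: j => [[|[|j]] Hj] //=.
Qed.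
Lemma mk_inj a b c d a' b' c' d' : a = a' -> b = b' -> c = c' -> d = d' ->
  mk a b c d = mk a' b' c' d'.
Proof. by move=> -> -> -> ->. Qed.
Lemma inv_mk a b c d : a * d - b * c = 1 -> invmx (mk a b c d) = mk d (-b) (-c) a.
Proof.
move=> h.
have hu : mk a b c d \in unitmx by rewrite unitmxE det_mk h unitr1.
have e : mk a b c d *m mk d (-b) (-c) a = 1%:M.
  rewrite mk_mul mk1; apply: mk_inj; rewrite -?h; ring.
by rewrite -[LHS]mulmx1 -e mulmxA mulVmx // mul1mx.
Qed.
End M.

Definition el (x : rat) := mk 1 x 0 1.
Definition el' (y : rat) := mk 1 0 y 1.
Definition dg (u : rat) := mk u 0 0 u^-1.
Definition wm (v : rat) := mk 0 v (- v^-1) 0.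

Lemma el_add x y : el x *m el y = el (x + y).
Proof. rewrite /el mk_mul; apply: mk_inj; ring. Qed.

Lemma el0 : el 0 = 1%:M.
Proof. by rewrite mk1. Qed.

Lemma inv_el x : invmx (el x) = el (- x).
Proof. rewrite inv_mk; last ring. apply: mk_inj; ring. Qed.

Lemma inv_el' x : invmx (el' x) = el' (- x).
Proof. rewrite inv_mk; last ring. apply: mk_inj; ring. Qed.

Lemma inv_dg u : u != 0 -> invmx (dg u) = dg u^-1.
Proof. move=> h; rewrite inv_mk; last (by field). apply: mk_inj; rewrite ?invrK; ring. Qed.

Lemma dg_conj u y : u != 0 -> dg u^-1 *m el y *m dg u = el (y / (u * u)).
Proof. move=> h; rewrite /dg /el !mk_mul invrK; apply: mk_inj; field; rewrite ?mulf_neq0 ?invr_eq0 //. Qed.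

Lemma wm_def v : v != 0 -> wm v = el v *m el' (- v^-1) *m el v.
Proof. move=> h; rewrite /wm /el /el' !mk_mul; apply: mk_inj; field; rewrite ?mulf_neq0 ?invr_eq0 //. Qed.

Lemma dg_wm u : u != 0 -> dg u = wm u *m wm (-1).
Proof. move=> h; rewrite /wm /dg !mk_mul; apply: mk_inj; rewrite ?invrN ?invr1; field; rewrite ?mulf_neq0 ?invr_eq0 //. Qed.

Lemma el'_conj y : el' y = wm 1 *m el (- y) *m invmx (wm 1).
Proof. rewrite /wm invr1 inv_mk; last ring. rewrite /el' /el !mk_mul; apply: mk_inj; ring. Qed.

Lemma wm1_4 : wm 1 *m wm 1 *m wm 1 *m wm 1 = 1%:M.
Proof. by rewrite /wm invr1 !mk_mul mk1; apply: mk_inj; ring. Qed.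

Section Rat.
Variable n : nat.
Hypothesis hn : (1 < n)%N.

Local Notation RR := (inZinv n).
Local Notation N := (n%:R : rat).

Lemma N_neq0 : N != 0.
Proof. by rewrite pnatr_eq0 -lt0n (ltn_trans _ hn). Qed.

Lemma inZ_int (z : int) : RR z%:~R.
Proof. by exists 0%N, z; rewrite expr0 mulr1. Qed.

Lemma inZ_add x y : RR x -> RR y -> RR (x + y).
Proof.
move=> [k [z hz]] [l [w hw]].
exists (k + l)%N, (z * (n%:R : int) ^+ l + w * (n%:R : int) ^+ k).
rewrite intrD !intrM !rmorphXn /= !rmorph_nat -hz -hw exprD; ring.
Qed.

Lemma inZ_mul x y : RR x -> RR y -> RR (x * y).
Proof.
move=> [k [z hz]] [l [w hw]].
exists (k + l)%N, (z * w).
rewrite intrM -hz -hw exprD; ring.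
Qed.

Lemma inZ_opp x : RR x -> RR (- x).
Proof. by move=> [k [z hz]]; exists k, (- z); rewrite intrN -hz mulNr. Qed.

Lemma inZ_invN j : RR ((N ^+ j)^-1).
Proof.
exists j, 1; rewrite mulVf // expf_neq0 // N_neq0 //.
Qed.

Lemma inZ_N j : RR (N ^+ j).
Proof. by exists 0%N, ((n%:R : int) ^+ j); rewrite expr0 mulr1 rmorphXn /= rmorph_nat. Qed.

Lemma inZ_sub x y : RR x -> RR y -> RR (x - y).
Proof. by move=> hx hy; apply: inZ_add => //; apply: inZ_opp. Qed.

Lemma inZ0 : RR 0. Proof. by exists 0%N, 0; rewrite mul0r. Qed.
Lemma inZ1 : RR 1. Proof. by exists 0%N, 1; rewrite mulr1. Qed.

Lemma SL2_mk a b c d : RR a -> RR b -> RR c -> RR d -> a * d - b * c = 1 ->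
  SL2 n (mk a b c d).
Proof.
move=> ha hb hc hd h; split; last by rewrite det_mk.
by move=> i j; rewrite mxE; case: ifP => _; case: ifP.
Qed.

Lemma SL2P A : SL2 n A -> exists a b c d, [/\ A = mk a b c d, RR a, RR b, RR c &
  RR d /\ a * d - b * c = 1].
Proof.
move=> [hA hd]; exists (A 0 0), (A 0 1), (A 1 0), (A 1 1); rewrite -mk_eta; split=> //.
by split => //; rewrite -det_mk -mk_eta.
Qed.

Lemma SL2_mul A B : SL2 n A -> SL2 n B -> SL2 n (A *m B).
Proof.
move=> hA hB; split; last by rewrite det_mulmx hA.2 hB.2 mulr1.
move: hA hB => /SL2P [a [b [c [d [-> ha hb hc [hd _]]]]]].
move=> /SL2P [a' [b' [c' [d' [-> ha' hb' hc' [hd' _]]]]]].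
rewrite mk_mul => i j; rewrite mxE;
by case: ifP => _; case: ifP => _; apply: inZ_add; apply: inZ_mul.
Qed.

Lemma SL2_inv A : SL2 n A -> SL2 n (invmx A).
Proof.
move=> /SL2P [a [b [c [d [-> ha hb hc [hd h]]]]]].
rewrite inv_mk //; apply: SL2_mk => //; try apply: inZ_opp => //.
by rewrite -h; ring.
Qed.

Lemma SL2_1 : SL2 n 1%:M.
Proof. by rewrite mk1; apply: SL2_mk; rewrite ?mulr1 ?mulr0 ?subr0 //; [apply: inZ1|apply: inZ0|apply: inZ0|apply: inZ1]. Qed.

Lemma SL2_unit A : SL2 n A -> A \in unitmx.
Proof. by move=> [_ h]; rewrite unitmxE h unitr1. Qed.

Local Notation C := (in_commSL2 n).

Lemma C_SL2 X : C X -> SL2 n X.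
Proof.
elim=> [|A B hA hB|Y1 Y2 _ hY1 _ hY2|Y _ hY].
- exact: SL2_1.
- by rewrite /commm; do ! apply: SL2_mul => //; apply: SL2_inv.
- exact: SL2_mul.
- exact: SL2_inv.
Qed.

Lemma C_normal g X : SL2 n g -> C X -> C (g *m X *m invmx g).
Proof.
move=> hg hX.
have hXs := C_SL2 hX.
have -> : g *m X *m invmx g = commm (invmx g) (invmx X) *m X.
  rewrite /commm !invmxK -!mulmxA mulVmx ?mulmx1 //; exact: SL2_unit.
apply: cSL2_mul => //; apply: cSL2_comm; exact: SL2_inv.
Qed.

Lemma SL2_el x : RR x -> SL2 n (el x).
Proof. move=> h; apply: SL2_mk; rewrite ?mulr1 ?mulr0 ?subr0 //; [apply: inZ1|apply: inZ0|apply: inZ1]. Qed.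

Lemma SL2_el' x : RR x -> SL2 n (el' x).
Proof. move=> h; apply: SL2_mk; rewrite ?mulr1 ?mul0r ?subr0 //; [apply: inZ1|apply: inZ0|apply: inZ1]. Qed.

Lemma SL2_dg u : u != 0 -> RR u -> RR u^-1 -> SL2 n (dg u).
Proof. move=> h hu hv; apply: SL2_mk; rewrite ?mulr0 ?subr0 ?divff //; apply: inZ0. Qed.

Lemma SL2_wm u : u != 0 -> RR u -> RR u^-1 -> SL2 n (wm u).
Proof.
move=> h hu hv; apply: SL2_mk; rewrite ?mul0r ?sub0r ?mulrN ?opprK ?divff //; try apply: inZ0.
exact: inZ_opp.
Qed.

Definition rel A (k : int) := C (A *m el (- k%:~R)).
Definition relE A := exists k, rel A k.

Lemma C_el_SL2 A (k : int) : SL2 n A -> C (A *m el (- k%:~R)) -> True.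
Proof. by []. Qed.

Lemma rel_mul A B k l : SL2 n A -> SL2 n B -> rel A k -> rel B l -> rel (A *m B) (k + l).
Proof.
move=> hA hB hk hl; rewrite /rel.
have -> : A *m B *m el (- (k + l)%:~R) =
   (A *m el (- k%:~R)) *m (el k%:~R *m (B *m el (- l%:~R)) *m invmx (el k%:~R)).
  rewrite inv_el !mulmxA -(mulmxA A (el _) (el _)) el_add addNr el0 mulmx1.
  rewrite -(mulmxA (A *m B) (el _) (el _)) el_add.
  by rewrite intrD opprD addrC.
apply: cSL2_mul => //; apply: C_normal => //; apply: SL2_el; exact: inZ_int.
Qed.

Lemma relE_mul A B : SL2 n A -> SL2 n B -> relE A -> relE B -> relE (A *m B).
Proof. by move=> hA hB [k hk] [l hl]; exists (k + l); apply: rel_mul. Qed.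

Lemma rel_conj g A k : SL2 n g -> SL2 n A -> rel A k -> rel (g *m A *m invmx g) k.
Proof.
move=> hg hA hk; rewrite /rel.
have -> : g *m A *m invmx g *m el (- k%:~R) =
   (g *m (A *m el (- k%:~R)) *m invmx g) *m commm (invmx g) (el (- k%:~R)).
  rewrite /commm invmxK inv_el opprK !mulmxA -(mulmxA _ (invmx g) g) mulVmx ?SL2_unit //.
  by rewrite mulmx1 -(mulmxA (g *m A) (el _) (el _)) el_add addNr el0 mulmx1.
apply: cSL2_mul; first exact: C_normal.
apply: cSL2_comm; first exact: SL2_inv.
apply: SL2_el; apply: inZ_opp; exact: inZ_int.
Qed.

Lemma relE_conj g A : SL2 n g -> SL2 n A -> relE A -> relE (g *m A *m invmx g).
Proof. by move=> hg hA [k hk]; exists k; apply: rel_conj. Qed.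

Lemma inZ_even x : RR x -> exists j (z : int), x * (N ^+ j * N ^+ j) = z%:~R.
Proof.
move=> [k [z hz]]; exists k, (z * (n%:R : int) ^+ k).
by rewrite mulrA hz intrM rmorphXn /= rmorph_nat.
Qed.

Lemma rel_el x : RR x -> relE (el x).
Proof.
move=> /inZ_even [j [z hz]].
have hu : N ^+ j != 0 by rewrite expf_neq0 // N_neq0.
exists z; rewrite /rel.
have -> : el x *m el (- z%:~R) = commm (dg (N ^+ j)) (el (- z%:~R)).
  rewrite /commm inv_el opprK inv_dg // dg_conj //; congr (el _ *m _).
  by rewrite -hz; field.
apply: cSL2_comm; first by apply: SL2_dg => //; [apply: inZ_N | apply: inZ_invN].
apply: SL2_el; apply: inZ_opp; exact: inZ_int.
Qed.

Lemma rel_el' x : RR x -> relE (el' x).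
Proof.
move=> hx; rewrite el'_conj; apply: relE_conj.
- by apply: SL2_wm; rewrite ?invr1 //; apply: inZ1.
- by apply: SL2_el; apply: inZ_opp.
- by apply: rel_el; apply: inZ_opp.
Qed.

Lemma rel_dg u : u != 0 -> RR u -> RR u^-1 -> relE (dg u).
Proof.
move=> h hu hv.
have hm1 : (-1 : rat) != 0 by rewrite oppr_eq0 oner_eq0.
have hR1 : RR (-1) by apply: inZ_opp; apply: inZ1.
have hR1' : RR (-1)^-1 by rewrite invrN invr1.
have hw : forall v, v != 0 -> RR v -> RR v^-1 -> relE (wm v) /\ SL2 n (wm v).
  move=> v hv0 hv1 hv2; split; last exact: SL2_wm.
  have hv3 : RR (- v^-1) by apply: inZ_opp.
  rewrite wm_def //; apply: relE_mul.
  - by apply: SL2_mul; [apply: SL2_el|apply: SL2_el'].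
  - exact: SL2_el.
  - by apply: relE_mul; [apply: SL2_el|apply: SL2_el'|apply: rel_el|apply: rel_el'].
  - exact: rel_el.
have [r1 s1] := hw u h hu hv.
have [r2 s2] := hw (-1) hm1 hR1 hR1'.
by rewrite dg_wm //; apply: relE_mul.
Qed.

Lemma rel_wm v : v != 0 -> RR v -> RR v^-1 -> relE (wm v) /\ SL2 n (wm v).
Proof.
move=> hv0 hv1 hv2; split; last exact: SL2_wm.
have hv3 : RR (- v^-1) by apply: inZ_opp.
rewrite wm_def //; apply: relE_mul.
- by apply: SL2_mul; [apply: SL2_el|apply: SL2_el'].
- exact: SL2_el.
- by apply: relE_mul; [apply: SL2_el|apply: SL2_el'|apply: rel_el|apply: rel_el'].
- exact: rel_el.
Qed.

Lemma rel_wmm1 : relE (wm (-1)) /\ SL2 n (wm (-1)).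
Proof.
apply: rel_wm; first by rewrite oppr_eq0 oner_eq0.
  by apply: inZ_opp; apply: inZ1.
by rewrite invrN invr1; apply: inZ_opp; apply: inZ1.
Qed.

Lemma euclid (M : nat) : forall (Nq a b c d : rat), Nq != 0 -> SL2 n (mk a b c d) ->
  (exists za : int, Nq * a = za%:~R) -> (exists zc : int, Nq * c = zc%:~R /\ (absz zc < M)%N) ->
  relE (mk a b c d).
Proof.
elim: M => [|M IH] Nq a b c d hN hA [za hza] [zc [hzc hM]]; first by [].
have [ha hb hc hd hdet] : [/\ RR a, RR b, RR c, RR d & a * d - b * c = 1].
  case: hA => he hdt; rewrite det_mk in hdt.
  by move: (he 0 0) (he 0 1) (he 1 0) (he 1 1); rewrite !mxE /=.
have [c0|cn0] := eqVneq c 0.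
  move: hdet; rewrite c0 mulr0 subr0 => had.
  have a0 : a != 0 by apply/eqP => a0; move: had; rewrite a0 mul0r => /eqP; rewrite eq_sym oner_eq0.
  have ainv : a^-1 = d by rewrite -[a^-1]mulr1 -had mulrA mulVf // mul1r.
  have -> : mk a b 0 d = dg a *m el (d * b).
    rewrite /dg /el mk_mul ainv; apply: mk_inj; rewrite ?mulr0 ?addr0 ?mul0r ?add0r ?mulr1 //.
    by rewrite mulrA had mul1r.
  apply: relE_mul.
  - by apply: SL2_dg => //; rewrite ainv.
  - by apply: SL2_el; apply: inZ_mul.
  - by apply: rel_dg => //; rewrite ainv.
  - by apply: rel_el; apply: inZ_mul.
have zcn0 : zc != 0.
  by apply/eqP => z0; move: hzc; rewrite z0 /= => /eqP; rewrite mulf_eq0 (negPf hN) (negPf cn0).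
set q := (za %/ zc)%Z.
set r := (za %% zc)%Z.
have hq : RR q%:~R by apply: inZ_int.
have E : mk a b c d = el q%:~R *m (wm (-1) *m mk c d (q%:~R * c - a) (q%:~R * d - b)).
  rewrite /el /wm !mk_mul invrN invr1 opprK; apply: mk_inj; ring.
have hA2 : SL2 n (mk c d (q%:~R * c - a) (q%:~R * d - b)).
  apply: SL2_mk => //; try (apply: inZ_sub => //; apply: inZ_mul => //).
  by rewrite -hdet; ring.
rewrite E; apply: relE_mul.
- exact: SL2_el.
- by apply: SL2_mul => //; case: rel_wmm1.
- exact: rel_el.
apply: relE_mul => //; first by case: rel_wmm1.
  by case: rel_wmm1.
apply: (IH Nq) => //; first by exists zc.
exists (- r); split.
  have er : za = q * zc + r := divz_eq za zc.
  rewrite mulrBr mulrCA hzc hza er intrD intrM intrN; ring.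
have := ltz_mod za zcn0; have := modz_ge0 za zcn0; rewrite -/r abszN.
move: hM; lia.
Qed.

Lemma relE_all A : SL2 n A -> relE A.
Proof.
move=> hA; have := hA; move=> /SL2P [a [b [c [d [eA ha hb hc [hd h]]]]]].
rewrite eA; rewrite eA in hA.
case: ha => [k [za hza]]; case: hc => [l [zc hzc]].
have hN : N ^+ (k + l) != 0 by rewrite expf_neq0 // N_neq0.
apply: (@euclid (absz (zc * (n%:R : int) ^+ k)).+1 (N ^+ (k + l))) => //.
  exists (za * (n%:R : int) ^+ l); rewrite intrM rmorphXn /= rmorph_nat -hza exprD; ring.
exists (zc * (n%:R : int) ^+ k); split => //.
rewrite intrM rmorphXn /= rmorph_nat -hzc exprD; ring.
Qed.

Lemma C_el_mulz t (k : int) : C (el t) -> C (el (k%:~R * t)).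
Proof.
move=> ht.
have hn' : forall m : nat, C (el (m%:R * t)).
  elim=> [|m IH]; first by rewrite mul0r el0; apply: cSL2_one.
  by rewrite mulrSr mulrDl mul1r -el_add; apply: cSL2_mul.
case: k => m; first by rewrite /= -[m%:~R]/(m%:R); apply: hn'.
rewrite NegzE intrN mulNr -inv_el; apply: cSL2_inv.
have -> : (m.+1 : int)%:~R = (m.+1%:R : rat) by [].
exact: hn'.
Qed.

Lemma rel_el1 : rel (el 1) 1.
Proof. by rewrite /rel el_add addrN el0; apply: cSL2_one. Qed.

Lemma C_el12 : C (el 12).
Proof.
have s1 : SL2 n (el 1) by apply: SL2_el; apply: inZ1.
have hm1 : RR (-1) by apply: inZ_opp; apply: inZ1.
have s2 : SL2 n (el' (-1)) by apply: SL2_el'.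
have sw : SL2 n (wm 1) by apply: SL2_wm; rewrite ?invr1 ?oner_eq0 //; apply: inZ1.
have r2 : rel (el' (-1)) 1.
  by rewrite el'_conj opprK; apply: rel_conj => //; apply: rel_el1.
have r3 : rel (wm 1) (1 + 1 + 1).
  rewrite wm_def ?oner_eq0 // invr1.
  apply: rel_mul; [apply: SL2_mul|exact: s1|apply: rel_mul|exact: rel_el1] => //.
  exact: rel_el1.
have sw2 : SL2 n (wm 1 *m wm 1) by apply: SL2_mul.
have sw3 : SL2 n (wm 1 *m wm 1 *m wm 1) by apply: SL2_mul.
have r4 := rel_mul sw3 sw (rel_mul sw2 sw (rel_mul sw sw r3 r3) r3) r3.
move: r4; rewrite wm1_4 /rel mul1mx => /cSL2_inv; rewrite inv_el opprK.
by congr (C (el _)).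
Qed.

Lemma C_eln : C (el (N ^+ 2 - 1)).
Proof.
have hN := N_neq0.
have hNi : N^-1 != 0 by rewrite invr_eq0.
have -> : el (N ^+ 2 - 1) = commm (dg N^-1) (el (- 1)).
  rewrite /commm inv_dg // inv_el opprK dg_conj // el_add; congr el.
  by field.
apply: cSL2_comm; last by apply: SL2_el; apply: inZ_opp; apply: inZ1.
apply: SL2_dg => //; first by have := inZ_invN 1; rewrite expr1.
by rewrite invrK; have := inZ_N 1; rewrite expr1.
Qed.

Lemma C_comb (a b : int) : C (el (a%:~R * 12 + b%:~R * (N ^+ 2 - 1))).
Proof. rewrite -el_add; apply: cSL2_mul; apply: C_el_mulz; [exact: C_el12|exact: C_eln]. Qed.

End Rat.

Definition Hn (M : nat) (tab : seq nat) (a b c d : nat) : nat :=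
  nth 0%N tab (a + M * (b + M * (c + M * d)))%N.
Definition mulm (M x y : nat) := ((x * y) %% M)%N.
Definition addm (M x y : nat) := ((x + y) %% M)%N.
Definition det1 (M a b c d : nat) : bool := mulm M a d == addm M (1 %% M) (mulm M b c).
Definition chk (M : nat) (tab : seq nat) : bool :=
 all (fun a => all (fun b => all (fun c => all (fun d =>
  det1 M a b c d ==> all (fun a' => all (fun b' => all (fun c' => all (fun d' =>
  det1 M a' b' c' d' ==>
   ((Hn M tab (addm M (mulm M a a') (mulm M b c')) (addm M (mulm M a b') (mulm M b d'))
       (addm M (mulm M c a') (mulm M d c')) (addm M (mulm M c b') (mulm M d d')) %% M)%N
    == addm M (Hn M tab a b c d %% M) (Hn M tab a' b' c' d' %% M)))
  (iota 0 M)) (iota 0 M)) (iota 0 M)) (iota 0 M)) (iota 0 M)) (iota 0 M)) (iota 0 M)) (iota 0 M).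
Definition chke (M : nat) (tab : seq nat) : bool :=
  all (fun j => (Hn M tab (1 %% M) j 0 (1 %% M) %% M == j)%N) (iota 0 M).

Definition tab3 := [:: 0; 0; 0; 0; 0; 0; 0; 0; 0; 0; 0; 0; 0; 0; 0; 0; 1; 2; 0; 0; 0; 0; 2; 1; 0; 0; 0; 0; 0; 0; 0; 1; 0; 0; 2; 0; 0; 2; 0; 0; 0; 0; 1; 0; 0; 0; 1; 0; 2; 0; 0; 0; 0; 0; 0; 0; 0; 0; 0; 2; 0; 0; 1; 0; 0; 1; 0; 0; 0; 2; 0; 0; 0; 0; 2; 1; 0; 0; 0; 0; 0]%N.
Definition tab4 := [:: 0; 0; 0; 0; 0; 0; 0; 0; 0; 0; 0; 0; 0; 0; 0; 0; 0; 0; 0; 0; 0; 0; 0; 0; 0; 0; 0; 0; 1; 2; 3; 0; 0; 0; 0; 0; 0; 0; 0; 0; 0; 0; 0; 0; 0; 0; 0; 0; 0; 0; 0; 0; 3; 2; 1; 0; 0; 0; 0; 0; 0; 0; 0; 0; 0; 0; 0; 0; 0; 1; 0; 0; 0; 2; 0; 0; 0; 3; 0; 0; 0; 3; 0; 0; 0; 0; 0; 0; 0; 0; 0; 1; 2; 0; 0; 0; 0; 2; 0; 0; 0; 0; 0; 3; 0; 0; 0; 0; 0; 0; 0; 1; 0; 1; 0; 0; 2; 0; 0; 0; 0; 0; 0; 3; 0; 0; 0; 0; 0; 0; 0; 0; 0; 0; 0; 0; 0; 0; 0; 0; 0; 0; 0; 0; 0; 0; 0; 0; 0; 0; 0; 2;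 0; 0; 0; 0; 3; 0; 1; 0; 0; 0; 0; 0; 0; 0; 0; 0; 0; 0; 0; 0; 0; 0; 0; 0; 0; 0; 0; 0; 1; 0; 3; 0; 0; 0; 0; 0; 0; 0; 0; 2; 0; 0; 0; 2; 0; 0; 0; 1; 0; 0; 0; 0; 0; 0; 0; 3; 0; 0; 0; 3; 0; 0; 2; 0; 0; 1; 0; 0; 0; 0; 0; 0; 0; 0; 0; 0; 0; 3; 0; 0; 0; 0; 0; 2; 0; 1; 0; 0; 0; 0; 0; 1; 0; 0; 0; 0; 0; 3; 0; 0; 0; 0; 2; 0]%N.

Lemma chk3 : chk 3 tab3. Proof. vm_compute. reflexivity. Qed.
Lemma chk4 : chk 4 tab4. Proof. vm_compute. reflexivity. Qed.
Lemma chke3 : chke 3 tab3. Proof. vm_compute. reflexivity. Qed.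
Lemma chke4 : chke 4 tab4. Proof. vm_compute. reflexivity. Qed.

Definition hZ p tab (a b c d : 'Z_p.+2) : 'Z_p.+2 := inZp (Hn p.+2 tab a b c d).

Lemma mem_Z p (x : 'Z_p.+2) : (val x \in iota 0 p.+2).
Proof. by rewrite mem_iota ltn_ord. Qed.

Lemma det1_Z p (a b c d : 'Z_p.+2) : a * d - b * c = 1 -> det1 p.+2 a b c d.
Proof.
move=> e; have e' : a * d = 1 + b * c by rewrite -e subrK.
by rewrite /det1; apply/eqP; move: (congr1 val e').
Qed.

Lemma hZ_hom p tab : chk p.+2 tab -> forall a b c d a' b' c' d' : 'Z_p.+2,
  a * d - b * c = 1 -> a' * d' - b' * c' = 1 ->
  hZ tab (a*a'+b*c') (a*b'+b*d') (c*a'+d*c') (c*b'+d*d') = hZ tab a b c d + hZ tab a' b' c' d'.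
Proof.
move=> H a b c d a' b' c' d' /det1_Z e1 /det1_Z e2.
move: H => /allP /(_ _ (mem_Z a)) /allP /(_ _ (mem_Z b)) /allP /(_ _ (mem_Z c))
  /allP /(_ _ (mem_Z d)) /implyP /(_ e1)
  /allP /(_ _ (mem_Z a')) /allP /(_ _ (mem_Z b')) /allP /(_ _ (mem_Z c'))
  /allP /(_ _ (mem_Z d')) /implyP /(_ e2) /eqP K.
by apply: val_inj; exact: K.
Qed.

Lemma hZ_e p tab : chke p.+2 tab -> forall x : 'Z_p.+2, hZ tab 1 x 0 1 = x.
Proof.
move=> /allP H x; apply: val_inj; have := H _ (mem_Z x); move/eqP => K; exact: K.
Qed.

Section Rho.
Variables (n p : nat).
Hypothesis hn : (1 < n)%N.
Hypothesis hco : coprime p.+2 n.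

Local Notation N := (n%:R : rat).
Local Notation Nz := (n%:R : 'Z_p.+2).

Lemma Nz_unit : Nz \is a GRing.unit.
Proof. by rewrite unitZpE. Qed.

Definition rho (x : rat) : 'Z_p.+2 :=
  let pr := ClassicalEpsilon.epsilon (inhabits (0%N, 0 : int))
     (fun pr : nat * int => x * N ^+ pr.1 = pr.2%:~R) in
  pr.2%:~R * (Nz ^+ pr.1)^-1.

Lemma rhoE x (k : nat) (z : int) : x * N ^+ k = z%:~R -> rho x = z%:~R * (Nz ^+ k)^-1.
Proof.
move=> hz; rewrite /rho.
set pr := ClassicalEpsilon.epsilon _ _.
have hp : x * N ^+ pr.1 = pr.2%:~R.
  by apply: (ClassicalEpsilon.epsilon_spec (inhabits (0%N, 0 : int))
     (fun pr : nat * int => x * N ^+ pr.1 = pr.2%:~R)); exists (k, z).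
clearbody pr; case: pr hp => [k1 z1] /= hp.
have Ei : z * (n%:R : int) ^+ k1 = z1 * (n%:R : int) ^+ k.
  apply: (@intr_inj rat); rewrite !intrM !rmorphXn /= !rmorph_nat -hz -hp; ring.
have Ez : z%:~R * Nz ^+ k1 = z1%:~R * Nz ^+ k.
  by have := congr1 (fun t : int => (t%:~R : 'Z_p.+2)) Ei; rewrite /= !intrM !rmorphXn /= !rmorph_nat.
have u1 : Nz ^+ k1 \is a GRing.unit by rewrite unitrX // Nz_unit.
have u2 : Nz ^+ k \is a GRing.unit by rewrite unitrX // Nz_unit.
apply: (mulIr u1); apply: (mulIr u2).
rewrite divrK // -(mulrA _ (Nz ^+ k1)) (mulrC (Nz ^+ k1)) mulrA divrK //.
Qed.


Lemma unitNk k : Nz ^+ k \is a GRing.unit.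
Proof. by rewrite unitrX // Nz_unit. Qed.

Lemma rho_add x y : inZinv n x -> inZinv n y -> rho (x + y) = rho x + rho y.
Proof.
move=> [k [z hz]] [l [w hw]].
rewrite (rhoE hz) (rhoE hw) (@rhoE _ (k + l) (z * (n%:R : int) ^+ l + w * (n%:R : int) ^+ k)); last first.
  rewrite intrD !intrM !rmorphXn /= !rmorph_nat -hz -hw exprD; ring.
rewrite intrD !intrM !rmorphXn /= !rmorph_nat exprD invrM ?unitNk //.
have ha := mulrV (unitNk k); have hb := mulrV (unitNk l).
set a := Nz ^+ k in ha *; set b := Nz ^+ l in hb *.
transitivity (z%:~R * a^-1 * (b * b^-1) + w%:~R * b^-1 * (a * a^-1)); first ring.
by rewrite ha hb !mulr1.
Qed.

Lemma rho_mul x y : inZinv n x -> inZinv n y -> rho (x * y) = rho x * rho y.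
Proof.
move=> [k [z hz]] [l [w hw]].
rewrite (rhoE hz) (rhoE hw) (@rhoE _ (k + l) (z * w)); last first.
  rewrite intrM -hz -hw exprD; ring.
rewrite intrM exprD invrM ?unitNk //; ring.
Qed.

Lemma rho_int (z : int) : rho z%:~R = z%:~R.
Proof. by rewrite (@rhoE _ 0 z) ?expr0 ?invr1 ?mulr1. Qed.

Lemma rho_opp x : inZinv n x -> rho (- x) = - rho x.
Proof.
move=> [k [z hz]]; rewrite (rhoE hz) (@rhoE _ k (- z)); last by rewrite mulNr hz intrN.
by rewrite intrN mulNr.
Qed.

End Rho.

Lemma sq_mod12 n : (n ^ 2 %% 12 = if 2 %| n then (if 3 %| n then 0 else 4) else (if 3 %| n then 9 else 1))%N.
Proof.
rewrite -modnXm {2 3 4}(divn_eq n 12).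
rewrite (dvdn_addr _ (dvdn_mull _ (isT : (2 %| 12)%N))) (dvdn_addr _ (dvdn_mull _ (isT : (3 %| 12)%N))).
have := ltn_pmod n (isT : (0 < 12)%N); move: (n %% 12)%N.
by case=> [|[|[|[|[|[|[|[|[|[|[|[|s]]]]]]]]]]]].
Qed.

Lemma Zp_int0 p (k : int) : (k%:~R : 'Z_p.+2) = 0 -> ((p.+2)%:Z %| k)%Z.
Proof.
rewrite dvdzE /=.
have h m : (m%:R : 'Z_p.+2) = 0 -> (p.+2 %| m)%N.
  by move/(congr1 (fun x : 'Z_p.+2 => nat_of_ord x)); rewrite /= val_Zp_nat //= /dvdn => ->.
case: k => m; first exact: h.
by rewrite NegzE intrN => /eqP; rewrite oppr_eq0 => /eqP /h.
Qed.

Definition comb (x : 'Z_2.+2) (y : 'Z_1.+2) : 'Z_10.+2 := inZp (9 * x + 4 * y).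

Definition chkc : bool :=
  all (fun x => all (fun y => all (fun x' => all (fun y' =>
    ((9 * ((x + x') %% 4) + 4 * ((y + y') %% 3)) %% 12 ==
     ((9 * x + 4 * y) %% 12 + (9 * x' + 4 * y') %% 12) %% 12)%N)
   (iota 0 3)) (iota 0 4)) (iota 0 3)) (iota 0 4).
Definition chkce : bool :=
  all (fun s => ((9 * (s %% 4) + 4 * (s %% 3)) %% 12 == s)%N) (iota 0 12).
Lemma chkcP : chkc. Proof. by vm_compute. Qed.
Lemma chkceP : chkce. Proof. by vm_compute. Qed.

Lemma comb_add x y x' y' : comb (x + x') (y + y') = comb x y + comb x' y'.
Proof.
move: chkcP => /allP /(_ _ (mem_Z x)) /allP /(_ _ (mem_Z y)) /allP /(_ _ (mem_Z x'))
  /allP /(_ _ (mem_Z y')) /eqP K.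
by apply: val_inj; exact: K.
Qed.

Lemma comb_nat s : (s < 12)%N -> comb s%:R s%:R = s%:R.
Proof.
move=> hs; move: chkceP => /allP /(_ s); rewrite mem_iota hs => /(_ isT) /eqP K.
apply: val_inj; rewrite /comb /= !val_Zp_nat //.
by rewrite K (modn_small hs).
Qed.

Lemma Zp_red p (k : int) : (12%:R : 'Z_p.+2) = 0 ->
  (k%:~R : 'Z_p.+2) = (absz (k %% 12)%Z)%:R.
Proof.
move=> h12; rewrite {1}(divz_eq k 12) intrD intrM.
have -> : ((12 : int)%:~R : 'Z_p.+2) = 12%:R by [].
rewrite h12 mulr0 add0r.
have := modz_ge0 k (isT : (12 : int) != 0).
by case: (k %% 12)%Z.
Qed.

Section Final.
Variable n : nat.
Hypothesis hn : (1 < n)%N.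
Local Notation C := (in_commSL2 n).

Lemma iso_generic (H : zmodType) (f : 'M[rat]_2 -> H) (g : H) :
  (forall A B, SL2 n A -> SL2 n B -> f (A *m B) = f A + f B) ->
  (forall k : int, f (el k%:~R) = g *~ k) ->
  (forall h : H, exists k : int, g *~ k = h) ->
  (forall k : int, g *~ k = 0 -> C (el k%:~R)) ->
  SL2ab_iso n H.
Proof.
move=> hom fe sur ker; exists f; split => //.
  move=> h; have [k <-] := sur h; exists (el k%:~R); split; last exact: fe.
  by apply: SL2_el; apply: inZ_int.
have f1 : f 1%:M = 0.
  have e := hom _ _ (SL2_1 n) (SL2_1 n); rewrite mulmx1 in e.
  by apply: (@addrI _ (f 1%:M)); rewrite addr0 -e.
have finv : forall X, SL2 n X -> f (invmx X) = - f X.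
  move=> X hX; have hu := SL2_unit hX; have hi := SL2_inv hX.
  by apply: (@addrI _ (f X)); rewrite addrN -hom // mulmxV.
have fC : forall X, C X -> f X = 0.
  move=> X; elim=> [|A B hA hB|Y1 Y2 h1 hY1 h2 hY2|Y hY hY'] //.
  - have hiA := SL2_inv hA; have hiB := SL2_inv hB.
    have s1 := SL2_mul hiA hiB; have s2 := SL2_mul s1 hA.
    rewrite /commm (hom _ _ s2 hB) (hom _ _ s1 hA) (hom _ _ hiA hiB) !finv //.
    by rewrite (addrAC (- f A)) addNr add0r addNr.
  - by rewrite hom ?hY1 ?hY2 ?addr0 //; apply: C_SL2.
  - by rewrite finv ?hY' ?oppr0 //; apply: C_SL2.
move=> A hA; split; last exact: fC.
move=> hf0.
have [k hk] := relE_all hn hA.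
have hS : SL2 n (el (- k%:~R)) by apply: SL2_el; apply: inZ_opp; apply: inZ_int.
have := fC _ hk; rewrite hom // hf0 add0r -intrN fe mulrNz => /eqP; rewrite oppr_eq0 => /eqP.
move=> /ker hCk.
have -> : A = A *m el (- k%:~R) *m el k%:~R by rewrite -mulmxA el_add addNr el0 mulmx1.
exact: cSL2_mul.
Qed.

Definition fM p tab (A : 'M[rat]_2) : 'Z_p.+2 :=
  hZ tab (rho n p (A 0 0)) (rho n p (A 0 1)) (rho n p (A 1 0)) (rho n p (A 1 1)).

Lemma rho_lin p (hco : coprime p.+2 n) a b c d : inZinv n a -> inZinv n b -> inZinv n c ->
  inZinv n d -> rho n p (a * b + c * d) = rho n p a * rho n p b + rho n p c * rho n p d.
Proof.
move=> ha hb hc hd.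
by rewrite (rho_add hco (inZ_mul ha hb) (inZ_mul hc hd)) !rho_mul.
Qed.

Lemma rho_det p (hco : coprime p.+2 n) a b c d : inZinv n a -> inZinv n b -> inZinv n c ->
  inZinv n d -> a * d - b * c = 1 -> rho n p a * rho n p d - rho n p b * rho n p c = 1.
Proof.
move=> ha hb hc hd h.
have hbc : inZinv n (- c) by apply: inZ_opp.
have := rho_lin hco ha hd hb hbc; rewrite mulrN h (rho_opp hco hc) mulrN.
by move=> <-; rewrite -[1]/((1 : int)%:~R) rho_int.
Qed.

Lemma fM_hom p tab (hco : coprime p.+2 n) : chk p.+2 tab ->
  forall A B, SL2 n A -> SL2 n B -> fM p tab (A *m B) = fM p tab A + fM p tab B.
Proof.
move=> hc A B /SL2P [a [b [c [d [-> ha hb hc' [hd h]]]]]].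
move=> /SL2P [a' [b' [c' [d' [-> ha' hb' hc'' [hd' h']]]]]].
rewrite mk_mul /fM !mkE00 !mkE01 !mkE10 !mkE11.
rewrite !rho_lin //; apply: hZ_hom => //; exact: rho_det.
Qed.

Lemma fM_el p tab (hco : coprime p.+2 n) : chke p.+2 tab ->
  forall k : int, fM p tab (el k%:~R) = k%:~R.
Proof.
move=> he k; rewrite /fM /el !mkE00 !mkE01 !mkE10 !mkE11.
rewrite -[1 : rat]/((1 : int)%:~R) -[0 : rat]/((0 : int)%:~R) !rho_int //.
exact: hZ_e.
Qed.

Lemma iso_single p tab (hco : coprime p.+2 n) : chk p.+2 tab -> chke p.+2 tab ->
  (forall k : int, (k%:~R : 'Z_p.+2) = 0 -> C (el k%:~R)) -> SL2ab_iso n 'Z_p.+2.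
Proof.
move=> hc he hk; apply: (@iso_generic _ (fM p tab) 1).
- exact: fM_hom.
- exact: fM_el.
- by move=> h; exists (val h)%:Z; rewrite -[_ *~ _]/((val h)%:R) Zp_nat valZpK.
- exact: hk.
Qed.

Local Notation N := (n%:R : rat).

Lemma C_ker_gen (a b k : int) : (k%:~R : rat) = a%:~R * 12 + b%:~R * (N ^+ 2 - 1) -> C (el k%:~R).
Proof. by move=> ->; apply: C_comb. Qed.

Lemma n2_eq r : (n ^ 2 %% 12)%N = r -> N ^+ 2 = 12 * ((n ^ 2 %/ 12)%N)%:R + r%:R.
Proof. by move=> h; rewrite -natrX {1}(divn_eq (n ^ 2) 12) natrD natrM h mulrC. Qed.

Lemma ker1 : (2 %| n)%N -> (3 %| n)%N -> forall k : int, C (el k%:~R).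
Proof.
move=> h2 h3 k; have := sq_mod12 n; rewrite h2 h3 => /n2_eq hN.
set t := (n ^ 2 %/ 12)%N in hN.
have ht : ((t : int)%:~R : rat) = t%:R by [].
apply: (@C_ker_gen (k * t) (- k)).
rewrite hN intrM intrN ht; ring.
Qed.

Lemma ker3 : (2 %| n)%N -> ~~ (3 %| n)%N -> forall k : int, (k%:~R : 'Z_1.+2) = 0 -> C (el k%:~R).
Proof.
move=> h2 h3 k /Zp_int0 /dvdzP [j ->].
have := sq_mod12 n; rewrite h2 (negPf h3) => /n2_eq hN.
set t := (n ^ 2 %/ 12)%N in hN.
have ht : ((t : int)%:~R : rat) = t%:R by [].
apply: (@C_ker_gen (- (j * t)) j).
rewrite hN !(intrM, intrN, intrD) ?ht; ring.
Qed.

Lemma ker4 : ~~ (2 %| n)%N -> (3 %| n)%N -> forall k : int, (k%:~R : 'Z_2.+2) = 0 -> C (el k%:~R).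
Proof.
move=> h2 h3 k /Zp_int0 /dvdzP [j ->].
have := sq_mod12 n; rewrite (negPf h2) h3 => /n2_eq hN.
set t := (n ^ 2 %/ 12)%N in hN.
have ht : ((t : int)%:~R : rat) = t%:R by [].
apply: (@C_ker_gen (j * (t + 1)) (- j)).
rewrite hN !(intrM, intrN, intrD) ?ht; ring.
Qed.

Lemma ker12 : forall k : int, (12 %| k)%Z -> C (el k%:~R).
Proof.
move=> k /dvdzP [j ->].
apply: (@C_ker_gen j 0); rewrite intrM mul0r addr0; ring.
Qed.

Lemma iso12 : ~~ (2 %| n)%N -> ~~ (3 %| n)%N -> SL2ab_iso n 'Z_10.+2.
Proof.
move=> h2 h3.
have c4 : coprime 2.+2 n.
  by rewrite -[2.+2]/(2 ^ 2)%N coprime_pexpl // prime_coprime.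
have c3 : coprime 1.+2 n by rewrite prime_coprime.
apply: (@iso_generic _ (fun A => comb (fM 2 tab4 A) (fM 1 tab3 A)) 1).
- move=> A B hA hB; rewrite (fM_hom c4 chk4) // (fM_hom c3 chk3) //.
  exact: comb_add.
- move=> k; rewrite (fM_el c4 chke4) (fM_el c3 chke3).
  rewrite !Zp_red; try (by apply/eqP; vm_compute).
  apply: comb_nat.
  have := ltz_mod k (isT : (12 : int) != 0); have := modz_ge0 k (isT : (12 : int) != 0).
  by case: (k %% 12)%Z.
- by move=> h; exists (val h)%:Z; rewrite -[_ *~ _]/((val h)%:R) Zp_nat valZpK.
- by move=> k /Zp_int0; apply: ker12.
Qed.

End Final.

Theorem mainTheorem4 (n : nat) (hn : (1 < n)%N) :
  [/\ (2 %| n)%N -> (3 %| n)%N -> SL2ab_iso n 'I_1,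
      (2 %| n)%N -> ~~ (3 %| n)%N -> SL2ab_iso n 'I_3,
      ~~ (2 %| n)%N -> (3 %| n)%N -> SL2ab_iso n 'I_4
    & ~~ (2 %| n)%N -> ~~ (3 %| n)%N -> SL2ab_iso n 'I_12].
Proof.
split.
- move=> h2 h3; apply: (@iso_generic n hn _ (fun _ => 0) 0).
  + by move=> A B _ _; rewrite addr0.
  + by move=> k; rewrite mul0rz.
  + by move=> h; exists 0; rewrite mulr0z; apply: val_inj; case: h => [[|]].
  + by move=> k _; apply: ker1.
- move=> h2 h3.
  have c3 : coprime 1.+2 n by rewrite prime_coprime.
  exact: (iso_single hn c3 chk3 chke3 (ker3 hn h2 h3)).
- move=> h2 h3.
  have c4 : coprime 2.+2 n by rewrite -[2.+2]/(2 ^ 2)%N coprime_pexpl // prime_coprime.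
  exact: (iso_single hn c4 chk4 chke4 (ker4 hn h2 h3)).
- by move=> h2 h3; exact: (iso12 hn h2 h3).
Qed.
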